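(* Let $\beta > 0$ be fixed. There is a constant $C$ such that for all $\alpha > 0$, $\tau > 0$, and every $u \in \mathrm{H}^1(\mathbb{R})$ that is continuous and affine on each interval $[k\tau,(k+1)\tau]$, $k \in \mathbb{Z}$, the upwinded interpolant $v$ of $u$ satisfies $$\alpha \int_{\mathbb{R}} | \dot v|^2 \leq C\left( |u|_{\mathrm{H}^{1/2}}^2 + \alpha \int_{\mathbb{R}} | \dot u |^2\right).$$
   Context: The upwinded interpolant of a continuous $u$ is the unique continuous function $v$ with $v(k\tau) = u(k\tau)$ for all $k \in \mathbb{Z}$ and which on each $[k\tau,(k+1)\tau]$ is of the form $c_1 + c_2\exp(-\beta t/\alpha)$ for constants $c_1,c_2$. A dot denotes the derivative. $|u|_{\mathrm{H}^{1/2}}$ is the $\mathrm{H}^{1/2}(\mathbb{R})$ seminorm (Slobodetski or, equivalently, Fourier seminorm). *)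

(* Defs.v *)
From HB Require Import structures.
From mathcomp Require Import all_boot all_order all_algebra.
From mathcomp Require Import all_classical all_reals all_analysis.
Set Implicit Arguments. Unset Strict Implicit. Unset Printing Implicit Defensive.
Import Order.TTheory GRing.Theory Num.Theory.
Import numFieldNormedType.Exports.
Local Open Scope ring_scope.

Definition sq_int {R : realType} (f : R -> R) : \bar R :=
  (\int[@lebesgue_measure R]_x ((f x) ^+ 2)%:E)%E.

(* Dirichlet energy \int_R |u'|^2, with the classical derivative (which exists
   outside a null set for the piecewise smooth functions considered) *)
Definition dirichlet {R : realType} (f : R -> R) : \bar R := sq_int (derive1 f).

Definition H12_seminorm2 {R : realType} (u : R -> R) : \bar R :=
  (\int[@lebesgue_measure R]_x \int[@lebesgue_measure R]_y
      (((u x - u y) ^+ 2) / ((x - y) ^+ 2))%:E)%E.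

(* u in H^1(R), for a continuous, piecewise affine u *)
Definition in_H1 {R : realType} (u : R -> R) : Prop :=
  (sq_int u < +oo)%E /\ (dirichlet u < +oo)%E.

Definition piecewise_affine {R : realType} (tau : R) (u : R -> R) : Prop :=
  forall k : int, exists c1 c2 : R, forall t : R,
    k%:~R * tau <= t <= (k + 1)%:~R * tau -> u t = c1 + c2 * t.

Definition upwinded_interpolant {R : realType} (alpha beta tau : R)
    (u v : R -> R) : Prop :=
  continuous v /\
  (forall k : int, v (k%:~R * tau) = u (k%:~R * tau)) /\
  (forall k : int, exists c1 c2 : R, forall t : R,
    k%:~R * tau <= t <= (k + 1)%:~R * tau ->
    v t = c1 + c2 * expR (- (beta * t / alpha))).

(* Main.v *)
Require Import Defs.
From HB Require Import structures.
From mathcomp Require Import all_boot all_order all_algebra.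
From mathcomp Require Import all_classical all_reals all_analysis.
From mathcomp Require Import measurable_realfun.
From mathcomp Require Import ring lra.
Import Order.TTheory GRing.Theory Num.Theory.
Import numFieldNormedType.Exports.
Local Open Scope ring_scope.

Section Helpers.
Local Open Scope classical_set_scope.
Context {R : realType}.
Notation mu := (@lebesgue_measure R).

Lemma mono_int (f g : R -> \bar R) : (forall x, (0 <= f x)%E) ->
  (forall x, (f x <= g x)%E) -> (\int[mu]_x f x <= \int[mu]_x g x)%E.
Proof.
move=> f0 fg.
have g0 x : (0 <= g x)%E by apply: le_trans (f0 x) (fg x).
rewrite !ge0_integralTE //=.
apply: ereal_sup_le => y [h hf <-]; exists h => // x.
exact: le_trans (hf x) (fg x).
Qed.

Lemma floor_cell (tau x : R) : 0 < tau ->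
  (Num.floor (x / tau))%:~R * tau <= x < (Num.floor (x / tau) + 1)%:~R * tau.
Proof.
move=> t0; have /andP[h1 h2] := Num.Theory.floor_itv (x / tau).
by rewrite -!ler_pdivlMr // -!ltr_pdivrMr // h1 h2.
Qed.

Lemma cell_floor (tau x : R) (k : int) : 0 < tau ->
  k%:~R * tau <= x < (k + 1)%:~R * tau -> Num.floor (x / tau) = k.
Proof.
move=> t0 /andP[h1 h2]; apply: Num.Theory.floor_def.
by rewrite ler_pdivlMr // ltr_pdivrMr // h1 h2.
Qed.

Definition cell (tau : R) (k : int) : set R := `[k%:~R * tau, (k+1)%:~R * tau[.

Definition cellJ (tau : R) (n : nat) : set R :=
  if @pickle_inv int n is Some k then `[k%:~R * tau, (k+1)%:~R * tau[ else set0.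

Lemma cellJ_cover (tau : R) : 0 < tau -> \bigcup_n cellJ tau n = setT.
Proof.
move=> t0; apply/seteqP; split => // x _.
have h : cellJ tau (pickle (Num.floor (x / tau))) x.
  by rewrite /cellJ pickleK_inv /= in_itv /= floor_cell.
by exists (pickle (Num.floor (x / tau))).
Qed.

Lemma cellJ_triv (tau : R) : 0 < tau -> trivIset setT (cellJ tau).
Proof.
move=> t0 n m _ _ [x []]; rewrite /cellJ.
have := @pickle_invK int n; have := @pickle_invK int m.
case: (pickle_inv n) => [k|//]; case: (pickle_inv m) => [l|//] /= <- <-.
rewrite !in_itv /= => /(@cell_floor _ _ _ t0) <- /(@cell_floor _ _ _ t0) <-. by [].
Qed.

Lemma cellJ_meas (tau : R) n : measurable (cellJ tau n).
Proof. by rewrite /cellJ; case: pickle_inv. Qed.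

Lemma meas_pw (tau : R) (f : R -> \bar R) : 0 < tau ->
  (forall k : int, measurable_fun `[k%:~R * tau, (k+1)%:~R * tau[ f) ->
  measurable_fun setT f.
Proof.
move=> t0 mf; rewrite -(cellJ_cover _ t0).
apply/measurable_fun_bigcup; first exact: cellJ_meas.
by move=> n; rewrite /cellJ; case: pickle_inv => [k|]; [exact: mf | exact: measurable_fun_set0].
Qed.

Lemma split_le (tau c : R) (f g : R -> \bar R) : 0 < tau -> 0 <= c ->
  (forall x, (0 <= f x)%E) -> (forall x, (0 <= g x)%E) ->
  measurable_fun setT f -> measurable_fun setT g ->
  (forall k : int, (\int[mu]_(x in cell tau k) f x <=
     c%:E * \int[mu]_(x in cell tau k) g x)%E) ->
  (\int[mu]_x f x <= c%:E * \int[mu]_x g x)%E.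
Proof.
move=> t0 c0 f0 g0 mf mg h.
have E (F : R -> \bar R) : (forall x, (0 <= F x)%E) -> measurable_fun setT F ->
    (\int[mu]_x F x = \sum_(n <oo) \int[mu]_(x in cellJ tau n) F x)%E.
  move=> F0 mF; rewrite -(cellJ_cover _ t0) ge0_integral_bigcup //.
  - exact: cellJ_meas.
  - by rewrite cellJ_cover.
  - exact: cellJ_triv.
rewrite (E f) // (E g) //.
rewrite -nneseriesZl; last by move=> i _; apply: integral_ge0.
apply: lee_nneseries => [i _ _|n _]; first by apply: integral_ge0.
rewrite /cellJ; case: pickle_inv => [k|]; first exact: h.
by rewrite !integral_set0 mule0.
Qed.

Lemma is_derive_lin (c x : R) : is_derive x 1 (fun t : R => c * t) c.
Proof.
have -> : (fun t : R => c * t) = c *: id by apply/funext => t.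
apply: (is_derive_eq (is_deriveZ c (is_derive_id x 1))); exact: mulr1.
Qed.

Lemma is_derive_expc (c x : R) :
  is_derive x 1 (fun t : R => expR (c * t)) (c * expR (c * x)).
Proof.
have dl : derivable (fun t : R => c * t) x 1.
  by have [] := is_derive_lin c x.
have de : derivable expR (c * x) 1 by exact: derivable_expR.
have dc : derivable (expR \o (fun t : R => c * t)) x 1.
  apply/derivable1_diffP; apply: differentiable_comp.
  exact/derivable1_diffP. exact/derivable1_diffP.
apply: DeriveDef; first exact: dc.
have [_ h1] := is_derive_lin c x; have [_ h2] := is_derive_expR (c * x).
by rewrite -derive1E (derive1_comp dl de) mulrC !derive1E h1 h2.
Qed.

Lemma is_derive_aexp (q1 q2 c x : R) :
  is_derive x 1 (fun t : R => q1 + q2 * expR (c * t)) (q2 * (c * expR (c * x))).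
Proof.
have -> : (fun t : R => q1 + q2 * expR (c * t)) =
    cst q1 + q2 *: (fun t : R => expR (c * t)) by apply/funext.
have h := is_derive_expc c x.
apply: (is_derive_eq (is_deriveD (is_derive_cst q1 x 1) (is_deriveZ q2 h))).
by rewrite add0r.
Qed.


Lemma aexp_cont (q1 q2 c : R) : continuous (fun t : R => q1 + q2 * expR (c * t)).
Proof.
move=> x; apply: differentiable_continuous; apply/derivable1_diffP.
by have [] := is_derive_aexp q1 q2 c x.
Qed.

Lemma int_exp_cell (K c a b : R) : c != 0 -> a < b ->
  (\int[mu]_(x in `]a, b[) (K * expR (c * x))%:E =
   ((K / c) * (expR (c * b) - expR (c * a)))%:E)%E.
Proof.
move=> c0 ab.
have cf : continuous (fun t : R => 0 + K * expR (c * t)) := aexp_cont 0 K c.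
have cf' : continuous (fun t : R => K * expR (c * t)).
  by move=> x; have := cf x; under eq_fun do rewrite add0r.
rewrite -(@integral_itv_bndoo _ _ _ _ true false); last first.
  apply/measurable_EFinP; apply: measurable_funS (continuous_measurable_fun cf') => //.
pose F := fun t : R => 0 + (K / c) * expR (c * t).
rewrite (@continuous_FTC2 _ _ F) //.
- by rewrite /F !add0r -EFinB mulrBr.
- exact: continuous_subspaceT.
- split.
  + by move=> x _; have [] := is_derive_aexp 0 (K / c) c x.
  + exact/cvg_at_right_filter/aexp_cont.
  + exact/cvg_at_left_filter/aexp_cont.
- move=> x _; rewrite derive1E /F derive_val add0r mul1r /GRing.scale /= mulr1 [expR _ * c]mulrC mulrA divfK //.
Qed.

Lemma derive_on_cell (f g : R -> R) a b x :
  (forall t, a <= t <= b -> f t = g t) -> a < x < b -> f^`() x = g^`() x.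
Proof.
move=> fg xab; rewrite !derive1E; apply: near_eq_derive.
have xi : x \in `]a, b[%R by rewrite in_itv /= xab.
apply: filterS (near_in_itvoo xi) => t.
by rewrite in_itv /= => /andP[/ltW ? /ltW ?]; apply: fg; apply/andP.
Qed.

Lemma int_cst_co (r a b : R) : a < b ->
  (\int[mu]_(x in `[a, b[) r%:E = (r * (b - a))%:E)%E.
Proof.
move=> ab; rewrite integral_cst //= lebesgue_measure_itv /= lte_fin ab.
by rewrite -EFinD -EFinM.
Qed.

Lemma alg_cell (q2 c tau Ea Q : R) : c < 0 -> 0 < tau ->
  0 < Q -> Q < 1 -> Q * (1 - c * tau) <= 1 ->
  (q2 * c) ^+ 2 / (c + c) * ((Ea * Q) ^+ 2 - Ea ^+ 2) <=
  (1 - c * tau / 2) * (((q2 * (Ea * Q - Ea)) / tau) ^+ 2 * tau).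
Proof.
move=> c0 t0 Q0 Q1 hQ.
rewrite -subr_ge0.
have -> : (1 - c * tau / 2) * (((q2 * (Ea * Q - Ea)) / tau) ^+ 2 * tau) -
  (q2 * c) ^+ 2 / (c + c) * ((Ea * Q) ^+ 2 - Ea ^+ 2) =
  (q2 * Ea) ^+ 2 / tau * (1 - Q) * (1 - Q * (1 - c * tau)).
  by field; rewrite gt_eqF // lt_eqF //; lra.
apply: mulr_ge0; [apply: mulr_ge0|lra].
  by apply: divr_ge0; [apply: sqr_ge0 | lra].
lra.
Qed.

Lemma sq_exp (q2 c x : R) :
  (q2 * (c * expR (c * x))) ^+ 2 = 0 + (q2 * c) ^+ 2 * expR ((c + c) * x).
Proof. by rewrite add0r mulrDl expRD; ring. Qed.

Lemma v_deriv (alpha beta a b q1 q2 : R) (v : R -> R) :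
  (forall t, a <= t <= b -> v t = q1 + q2 * expR (- (beta * t / alpha))) ->
  forall x, a < x < b -> derive1 v x = q2 * (- (beta / alpha) * expR (- (beta / alpha) * x)).
Proof.
move=> hv x xab.
have h := is_derive_aexp q1 q2 (- (beta / alpha)) x.
rewrite (@derive_on_cell _ (fun t => q1 + q2 * expR (- (beta / alpha) * t)) a b x); last by [].
  by rewrite derive1E derive_val.
move=> t /hv ->; congr (_ + _ * expR _).
by rewrite mulNr mulrAC.
Qed.

Arguments v_deriv {alpha beta a b q1 q2 v}.

Lemma v_meas (alpha beta a b q1 q2 : R) (v : R -> R) :
  (forall t, a <= t <= b -> v t = q1 + q2 * expR (- (beta * t / alpha))) ->
  measurable_fun `]a, b[ (fun x => ((derive1 v x) ^+ 2)%:E).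
Proof.
move=> hv; set c := - (beta / alpha).
apply: (@eq_measurable_fun _ _ _ _ _ (fun x => (0 + (q2 * c) ^+ 2 * expR ((c + c) * x))%:E)).
  move=> x; rewrite inE /= in_itv /= => xab.
  by rewrite (v_deriv hv) // sq_exp.
apply/measurable_EFinP; apply: measurable_funS (continuous_measurable_fun (aexp_cont _ _ _)) => //.
Qed.

Lemma exp2c (c y : R) : expR ((c + c) * y) = expR (c * y) ^+ 2.
Proof. by rewrite mulrDl expRD expr2. Qed.

Lemma cellA (alpha beta tau a q1 q2 : R) (u v : R -> R) :
  0 < alpha -> 0 < beta -> 0 < tau ->
  (forall t, a <= t <= a + tau -> v t = q1 + q2 * expR (- (beta * t / alpha))) ->
  v a = u a -> v (a + tau) = u (a + tau) ->
  (\int[mu]_(x in `[a, (a + tau)%R[) ((derive1 v x) ^+ 2)%:E <=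
   (1 + beta * tau / (2 * alpha))%:E *
   \int[mu]_(x in `[a, (a + tau)%R[) (((u (a + tau) - u a) / tau) ^+ 2)%:E)%E.
Proof.
move=> a0 b0 t0 hv hva hvb.
have ab : a < a + tau by rewrite ltrDl.
rewrite int_cst_co // (_ : a + tau - a = tau); last by rewrite addrAC subrr add0r.
rewrite (@integral_itv_bndoo _ _ _ _ true true); last exact: v_meas hv.
under eq_integral => x.
  rewrite inE /= in_itv /= => xab; rewrite (v_deriv hv) // sq_exp add0r.
  over.
set c := - (beta / alpha).
have c0 : c < 0 by rewrite /c oppr_lt0 divr_gt0.
rewrite int_exp_cell //; last by rewrite lt_eqF // -(addr0 0) ltrD.
rewrite -EFinM lee_fin.
have hE y : - (beta * y / alpha) = c * y by rewrite /c mulNr mulrAC.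
rewrite -hva -hvb !hv; last 2 first.
  by rewrite lexx ltW.
  by rewrite lexx ltW.
rewrite (hE (a + tau)) (hE a) !exp2c (mulrDr c a tau) expRD.
have -> : 1 + beta * tau / (2 * alpha) = 1 - c * tau / 2.
  by rewrite /c; field; rewrite gt_eqF.
have -> : q1 + q2 * (expR (c * a) * expR (c * tau)) - (q1 + q2 * expR (c * a)) =
  q2 * (expR (c * a) * expR (c * tau) - expR (c * a)) by ring.
apply: alg_cell => //.
- exact: expR_gt0.
- by rewrite expR_lt1 pmulr_llt0.
- have e : expR (c * tau) * expR (- (c * tau)) = 1 by rewrite -expRD subrr expR0.
  by rewrite -[X in _ <= X]e ler_pM2l ?expR_gt0 // expR_ge1Dx.
Qed.

Lemma u_deriv (a b p1 p2 : R) (u : R -> R) :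
  (forall t, a <= t <= b -> u t = p1 + p2 * t) ->
  forall x, a < x < b -> derive1 u x = p2.
Proof.
move=> hu x xab.
have h : is_derive x 1 (fun t : R => p1 + p2 * t) p2.
  have -> : (fun t : R => p1 + p2 * t) = cst p1 + p2 *: id by apply/funext.
  apply: (is_derive_eq (is_deriveD (is_derive_cst p1 x 1) (is_deriveZ p2 (is_derive_id x 1)))).
  by rewrite add0r /GRing.scale /= mulr1.
rewrite (@derive_on_cell _ (fun t => p1 + p2 * t) a b x) //.
by rewrite derive1E derive_val.
Qed.

Arguments u_deriv {a b p1 p2 u}.

Lemma u_meas (a b p1 p2 : R) (u : R -> R) :
  (forall t, a <= t <= b -> u t = p1 + p2 * t) ->
  measurable_fun `[a, b[ (fun x => ((derive1 u x) ^+ 2)%:E).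
Proof.
move=> hu; apply/emeasurable_fun_itv_obnd_cbndP.
apply: (@eq_measurable_fun _ _ _ _ _ (cst (p2 ^+ 2)%:E)) => //.
by move=> x; rewrite inE /= in_itv /= => xab; rewrite (u_deriv hu).
Qed.

Lemma cellB (tau a p1 p2 : R) (u : R -> R) : 0 < tau ->
  (forall t, a <= t <= a + tau -> u t = p1 + p2 * t) ->
  (\int[mu]_(x in `[a, (a + tau)%R[) (((u (a + tau) - u a) / tau) ^+ 2)%:E <=
   1%:E * \int[mu]_(x in `[a, (a + tau)%R[) ((derive1 u x) ^+ 2)%:E)%E.
Proof.
move=> t0 hu; rewrite mul1e.
have ab : a < a + tau by rewrite ltrDl.
have -> : (u (a + tau) - u a) / tau = p2.
  rewrite !hu ?lexx ?(ltW ab) //; field; by rewrite gt_eqF.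
rewrite (@integral_itv_bndoo _ _ _ _ true true); last exact: measurable_cst.
rewrite (@integral_itv_bndoo _ _ _ _ true true); last first.
  by apply/emeasurable_fun_itv_obnd_cbndP; exact: u_meas hu.
under [X in (_ <= X)%E]eq_integral => x.
  rewrite inE /= in_itv /= => xab; rewrite (u_deriv hu) //.
  over.
by [].
Qed.
Lemma cellC (tau a p1 p2 x : R) (u : R -> R) : 0 < tau ->
  (forall t, a <= t <= a + tau -> u t = p1 + p2 * t) -> a <= x <= a + tau ->
  ((tau * ((u (a + tau) - u a) / tau) ^+ 2)%:E <=
   \int[mu]_y (((u x - u y) ^+ 2) / ((x - y) ^+ 2))%:E)%E.
Proof.
move=> t0 hu xab.
have ab : a < a + tau by rewrite ltrDl.
have -> : (u (a + tau) - u a) / tau = p2.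
  rewrite !hu ?lexx ?(ltW ab) //; field; by rewrite gt_eqF.
set D := `]a, (a + tau)%R[ `\ x.
have mD : measurable D by apply: measurableD.
apply: (@le_trans _ _ (\int[mu]_y (((fun=> (p2 ^+ 2)%:E) \_ D) y))%E); last first.
  apply: mono_int.
    by move=> y; rewrite /patch; case: ifP => // _; rewrite lee_fin sqr_ge0.
  move=> y; rewrite /patch; case: ifP => [|_]; last first.
    by rewrite lee_fin divr_ge0 // sqr_ge0.
  rewrite inE /D /= in_itv /= => -[/andP[ay yb] yx].
  rewrite lee_fin !hu ?(ltW ay) ?(ltW yb) //.
  have xy : x - y != 0 by rewrite subr_eq0; apply/eqP => h; apply: yx.
  rewrite (_ : p1 + p2 * x - (p1 + p2 * y) = p2 * (x - y)); last by ring.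
  by rewrite exprMn mulfK // sqrf_eq0.
rewrite -integral_mkcond integral_setD1; [|exact: mD|exact: measurable_cst].
rewrite -(@integral_itv_bndoo _ _ _ _ true true); last exact: measurable_cst.
rewrite int_cst_co // (_ : a + tau - a = tau); last by rewrite addrAC subrr add0r.
by rewrite mulrC.
Qed.

Lemma final_comb (alpha beta tau dv du w0 h : R) : 0 < alpha -> 0 < beta -> 0 < tau ->
  0 <= du -> 0 <= w0 -> 0 <= h ->
  (dv%:E <= (1 + beta * tau / (2 * alpha))%:E * w0%:E)%E ->
  (w0%:E <= du%:E)%E -> (tau%:E * w0%:E <= h%:E)%E ->
  (alpha%:E * dv%:E <= (1 + beta / 2)%:E * (h%:E + alpha%:E * du%:E))%E.
Proof.
move=> a0 b0 t0 du0 w00 h0; rewrite -!EFinM !lee_fin => hA hB hC.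
have e1 : alpha * dv <= alpha * ((1 + beta * tau / (2 * alpha)) * w0).
  by rewrite ler_pM2l.
have e2 : alpha * ((1 + beta * tau / (2 * alpha)) * w0) =
   alpha * w0 + beta / 2 * (tau * w0) by field; rewrite gt_eqF.
have e3 : alpha * w0 <= alpha * du by rewrite ler_pM2l.
have e4 : beta / 2 * (tau * w0) <= beta / 2 * h.
  by rewrite ler_pM2l // divr_gt0.
have e5 : 0 <= beta / 2 * (alpha * du) by rewrite mulr_ge0 // ?mulr_ge0 // ltW // divr_gt0.
have e6 : 0 <= alpha * du by rewrite mulr_ge0 // ltW.
rewrite mulrDl mul1r; lra.
Qed.

Lemma final_comb_inf (alpha beta dv du : R) : 0 < alpha -> 0 < beta -> 0 <= du ->
  (alpha%:E * dv%:E <= (1 + beta / 2)%:E * (+oo + alpha%:E * du%:E))%E.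
Proof.
move=> a0 b0 du0.
have hb2 : 0 < beta / 2 by apply: divr_gt0.
have hb : 0 < 1 + beta / 2 by lra.
by rewrite -EFinM addye // gt0_muley ?leey // lte_fin.
Qed.
End Helpers.

Local Open Scope classical_set_scope.

Theorem proposition13 (R : realType) (beta : R) (hbeta : 0 < beta) :
  exists C : R, forall (alpha tau : R) (u v : R -> R),
    0 < alpha -> 0 < tau ->
    in_H1 u -> continuous u -> piecewise_affine tau u ->
    upwinded_interpolant alpha beta tau u v ->
    (alpha%:E * dirichlet v <= C%:E * (H12_seminorm2 u + alpha%:E * dirichlet u))%E.
Proof.
exists (1 + beta / 2) => alpha tau u v a0 t0 [_ hdu] cu pa [_ [hn hv]].
have cellE (k : int) : (k + 1)%:~R * tau = k%:~R * tau + tau.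
  by rewrite intrD mulrDl mul1r.
pose w x := (u ((Num.floor (x / tau) + 1)%:~R * tau) -
             u ((Num.floor (x / tau))%:~R * tau)) / tau.
have wE (k : int) x : x \in `[k%:~R * tau, k%:~R * tau + tau[ ->
    w x = (u (k%:~R * tau + tau) - u (k%:~R * tau)) / tau.
  rewrite inE /= in_itv /= -cellE => xk.
  by rewrite /w (@cell_floor _ _ _ _ t0 xk) cellE.
have mw : measurable_fun setT (fun x => (w x ^+ 2)%:E).
  apply: (@meas_pw _ tau _ t0) => k; rewrite cellE.
  apply: (@eq_measurable_fun _ _ _ _ _
     (cst (((u (k%:~R * tau + tau) - u (k%:~R * tau)) / tau) ^+ 2)%:E)); last exact: measurable_cst.
  by move=> x xk; rewrite /= (wE k x).
have mv : measurable_fun setT (fun x => (derive1 v x ^+ 2)%:E).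
  apply: (@meas_pw _ tau _ t0) => k; have [q1 [q2 hq]] := hv k.
  by apply/emeasurable_fun_itv_obnd_cbndP; exact: (v_meas _ _ _ _ _ _ _ hq).
have mu' : measurable_fun setT (fun x => (derive1 u x ^+ 2)%:E).
  apply: (@meas_pw _ tau _ t0) => k; have [p1 [p2 hp]] := pa k.
  exact: (u_meas _ _ _ _ _ hp).
have sq0 (f : R -> R) x : (0 <= (f x ^+ 2)%:E)%E by rewrite lee_fin sqr_ge0.
set W := (\int[lebesgue_measure]_x (w x ^+ 2)%:E)%E.
have hA : (dirichlet v <= (1 + beta * tau / (2 * alpha))%:E * W)%E.
  rewrite /dirichlet /sq_int; apply: (@split_le _ tau _ _ _ t0) => //.
    by rewrite addr_ge0 // divr_ge0 // ?mulr_ge0 // ltW.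
  move=> k; have [q1 [q2 hq]] := hv k.
  rewrite /cell cellE.
  under [X in (_ <= _ * X)%E]eq_integral => x xk do rewrite (wE k x xk).
  apply: cellA => //.
  - by move=> t; rewrite -cellE; exact: hq.
  by rewrite -cellE; exact: hn.
have hB : (W <= 1%:E * dirichlet u)%E.
  rewrite /dirichlet /sq_int; apply: (@split_le _ tau _ _ _ t0) => //.
  move=> k; have [p1 [p2 hp]] := pa k.
  rewrite /cell cellE.
  under [X in (X <= _)%E]eq_integral => x xk do rewrite (wE k x xk).
  apply: cellB => //.
  by move=> t; rewrite -cellE; exact: hp.
have hC : (tau%:E * W <= H12_seminorm2 u)%E.
  rewrite /W -ge0_integralZl_EFin //; last exact: ltW.
  apply: mono_int => x; first by rewrite -EFinM lee_fin mulr_ge0 // ?sqr_ge0 // ltW.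
  have [p1 [p2 hp]] := pa (Num.floor (x / tau)).
  have /andP[xa xb] := floor_cell tau x t0.
  rewrite -EFinM /w cellE; apply: (cellC _ _ _ _ _ _ t0).
    by move=> t; rewrite -cellE; exact: hp.
  by rewrite xa -cellE ltW.
have Dv0 : (0 <= dirichlet v)%E by apply: integral_ge0 => x _; exact: sq0.
have Du0 : (0 <= dirichlet u)%E by apply: integral_ge0 => x _; exact: sq0.
have W0 : (0 <= W)%E by apply: integral_ge0 => x _; exact: sq0.
have H0 : (0 <= H12_seminorm2 u)%E.
  apply: integral_ge0 => x _; apply: integral_ge0 => y _.
  by rewrite lee_fin divr_ge0 // sqr_ge0.
have fin (x : \bar R) (y : R) : (0 <= x)%E -> (x <= y%:E)%E -> x = (fine x)%:E.
  by case: x => // _; rewrite leye_eq.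
rewrite mul1e in hB.
have Duf : dirichlet u = (fine (dirichlet u))%:E.
  by move: hdu Du0; case: (dirichlet u).
rewrite Duf in hB.
have Wf := fin _ _ W0 hB.
move: hA hB hC; rewrite Wf => hA hB hC.
have Dvf := fin _ _ Dv0 hA.
rewrite Dvf in hA *.
rewrite Duf.
have du0 : 0 <= fine (dirichlet u) by move: Du0; rewrite Duf lee_fin.
have w00 : 0 <= fine W by move: W0; rewrite Wf lee_fin.
move: hA hB hC H0; case: (H12_seminorm2 u) => [h| |] hA hB hC H0; last by [].
  have h0 : 0 <= h by rewrite -lee_fin.
  exact: (@final_comb _ _ _ _ _ _ _ _ a0 hbeta t0 du0 w00 h0 hA hB hC).
exact: (@final_comb_inf _ _ _ _ _ a0 hbeta du0).
Qed.
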